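(* Let $\Delta\ge 1$ and define $F_\Delta(k,d)=\Delta^{-k\log\frac{k}{d}}$. For every positive integer $t$ and all integers $k_1,\ldots,k_t$ and $d_1,\ldots,d_t$ with $1\le k_i<d_i$ for all $i\le t$, $$\prod_{i\le t}F_\Delta(k_i,d_i)\le F_\Delta\Big(\sum_{i\le t}k_i,\sum_{i\le t}d_i\Big).$$
   Context: Logarithms are natural. *)

(* Defs.v *)
From HB Require Import structures.
From mathcomp Require Import all_boot all_order all_algebra.
From mathcomp Require Import all_classical all_reals all_analysis.
Set Implicit Arguments. Unset Strict Implicit. Unset Printing Implicit Defensive.
Import Order.TTheory GRing.Theory Num.Theory.
Local Open Scope ring_scope.

Definition F (R : realType) (D : R) (k d : nat) : R :=
  D `^ (- (k%:R * ln (k%:R / d%:R))).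

(* Main.v *)
Require Import Defs.
From HB Require Import structures.
From mathcomp Require Import all_boot all_order all_algebra.
From mathcomp Require Import all_classical all_reals all_analysis.
From mathcomp Require Import ring lra.
Import Order.TTheory GRing.Theory Num.Theory.
Local Open Scope ring_scope.

Lemma term (R : realType) (a b A B : R) : 0 < a -> 0 < b -> 0 < A -> 0 < B ->
  a - b * (A / B) <= a * ln (a / b) - a * ln (A / B).
Proof.
move=> a0 b0 A0 B0.
have x0 : 0 < b * A / (a * B) by rewrite divr_gt0 ?mulr_gt0.
have hx : ln (b * A / (a * B)) <= b * A / (a * B) - 1.
  have := @le_ln1Dx R (b * A / (a * B) - 1).
  rewrite (addrC 1) subrK; apply; lra.
have e : ln (b * A / (a * B)) = ln b + ln A - (ln a + ln B).
  by rewrite ln_div ?lnM ?posrE ?mulr_gt0.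
have e1 : ln (a / b) = ln a - ln b by rewrite ln_div ?posrE.
have e2 : ln (A / B) = ln A - ln B by rewrite ln_div ?posrE.
have h2 : a * ln (b * A / (a * B)) <= a * (b * A / (a * B) - 1).
  by rewrite ler_wpM2l // ltW.
have e3 : a * (b * A / (a * B) - 1) = b * (A / B) - a.
  by field; rewrite ?gt_eqF ?lt0r_neq0 // ?mulr_gt0.
rewrite e in h2; rewrite e3 in h2; rewrite e1 e2.
lra.
Qed.

Lemma logsum (R : realType) t (a b : 'I_t -> R) :
  (forall i, 0 < a i) -> (forall i, 0 < b i) ->
  0 < \sum_i a i -> 0 < \sum_i b i ->
  (\sum_i a i) * ln ((\sum_i a i) / (\sum_i b i)) <= \sum_i a i * ln (a i / b i).
Proof.
move=> ha hb; set A := \sum_i a i; set B := \sum_i b i => A0 B0.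
have : \sum_i (a i - b i * (A / B)) <= \sum_i (a i * ln (a i / b i) - a i * ln (A / B)).
  by apply: ler_sum => i _; apply: term.
rewrite !sumrB -!mulr_suml -/A -/B.
have -> : B * (A / B) = A by field; rewrite gt_eqF.
lra.
Qed.

Lemma prodpow (R : realType) (D : R) t (e : 'I_t -> R) : 1 <= D ->
  \prod_i D `^ e i = D `^ (\sum_i e i).
Proof.
move=> D1; have D0 : D != 0 by rewrite gt_eqF // (lt_le_trans ltr01).
apply/esym; apply: (big_morph (powR D)).
  by move=> x y; rewrite powRD // D0 implybT.
by rewrite powRr0.
Qed.

Theorem lemma3 (R : realType) (D : R) (t : nat) (k d : nat -> nat) :
  1 <= D -> (0 < t)%N ->
  (forall i, (i < t)%N -> (1 <= k i)%N /\ (k i < d i)%N) ->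
  \prod_(i < t) F D (k i) (d i) <= F D (\sum_(i < t) k i)%N (\sum_(i < t) d i)%N.
Proof.
move=> D1 t0 hk; rewrite /F prodpow //; apply: ler_powR => //.
rewrite sumrN lerN2 !natr_sum.
have ha : forall i : 'I_t, 0 < (k i)%:R :> R.
  by move=> i; rewrite ltr0n; case: (hk i (ltn_ord i)).
have hb : forall i : 'I_t, 0 < (d i)%:R :> R.
  move=> i; rewrite ltr0n; case: (hk i (ltn_ord i)) => h1 h2.
  exact: leq_trans h1 (ltnW h2).
have i0 : 'I_t by exact: Ordinal t0.
apply: logsum => //.
  by rewrite (bigD1 i0) //= ltr_pwDl ?ha ?sumr_ge0 // => i _; apply: ltW.
by rewrite (bigD1 i0) //= ltr_pwDl ?hb ?sumr_ge0 // => i _; apply: ltW.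
Qed.
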